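(* For the LPE-BC with COF with $K\ge 2$ users and $Q\ge 1$ layers, every achievable rate tuple $(R_1,\dots,R_K)$ (and hence every point of the capacity region) satisfies $$\sum_{k=1}^{K}\omega_k R_k\;\le\;\sum_{q=1}^{Q}\max_{k\in\{1,\dots,K\}}\Big(\omega_{\pi(k)}\,\Pr\big[\max(N_{\pi(k)},N_{\pi(k+1)},\dots,N_{\pi(K)})\ge q\big]\Big)$$ for every weight vector $(\omega_1,\dots,\omega_K)\in\mathbb{R}_+^K$ and every permutation $\pi$ of $\{1,\dots,K\}$.
   Context: Layered packet erasure broadcast channel (LPE-BC) with channel output feedback (COF): fix integers $K$ (number of users) and $Q$ (number of layers) and a finite field $\mathcal{X}$. In each time slot $t$ the transmitter sends $X_t=(X_{1,t},\dots,X_{Q,t})\in\mathcal{X}^Q$. A random channel state $N_t=(N_{1,t},\dots,N_{K,t})\in\{0,1,\dots,Q\}^K$, i.i.d. across slots with an arbitrary fixed joint distribution of the components $(N_1,\dots,N_K)$ (components may be dependent), determines the output of user $k$: $Y_{k,t}=(X_{1,t},\dots,X_{N_{k,t},t})$ if $N_{k,t}>0$ and $Y_{k,t}=\mathsf{e}$ (a fixed erasure symbol) if $N_{k,t}=0$. A code of length $n$ with rates $(R_1,\dots,R_K)$ (measured in packets, i.e. field symbols, per slot) has independent uniform messages $W_k$ taking $|\mathcal{X}|^{nR_k}$ values; with feedback the encoder at time $t$ is $X_t=f_t(W_1,\dots,W_K,N_1,\dots,N_{t-1})$; receiver $k$ knows all states $N_1,\dots,N_n$ and decodes $\hat W_k=\mathrm{dec}_k(Y_k^n,N_1,\dots,N_n)$.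 The error probability is $\Pr[\exists k:\hat W_k\ne W_k]$; a rate tuple is achievable if there is a sequence of codes with error probability tending to $0$ as $n\to\infty$; the capacity region is the convex closure of the set of achievable rate tuples. *)

(* Defs.v *)
From HB Require Import structures.
From mathcomp Require Import all_boot all_order all_algebra all_fingroup all_field.
From mathcomp Require Import all_classical all_reals all_analysis.
Set Implicit Arguments. Unset Strict Implicit. Unset Printing Implicit Defensive.
Import Order.TTheory GRing.Theory Num.Theory.
Local Open Scope ring_scope.

Section LPEBC.
Variables (R : realType) (F : finFieldType) (K Q : nat).

Definition state := {ffun 'I_K -> 'I_Q.+1}.
Definition input := {ffun 'I_Q -> F}.
(* channel output of one user: layer q (0-based) is seen iff q < N_k;
   all-None = erasure symbol e (N_k = 0) *)
Definition output := {ffun 'I_Q -> option F}.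

Definition chan_out (x : input) (Nk : 'I_Q.+1) : output :=
  [ffun q : 'I_Q => if (q < Nk)%N then Some (x q) else None].

Definition msgs (M : 'I_K -> nat) := {dffun forall k : 'I_K, 'I_(M k)}.

Definition past n (t : 'I_n) (s : {ffun 'I_n -> state}) : {ffun 'I_t -> state} :=
  [ffun i : 'I_t => s (widen_ord (ltnW (ltn_ord t)) i)].

Record code (n : nat) (M : 'I_K -> nat) := Code {
  enc : forall t : 'I_n, msgs M -> {ffun 'I_t -> state} -> input;
  dec : forall k : 'I_K, {ffun 'I_n -> output} -> {ffun 'I_n -> state} -> 'I_(M k)
}.

Definition tx n M (c : code n M) (w : msgs M) (s : {ffun 'I_n -> state}) (t : 'I_n)
  : input := @enc n M c t w (past t s).

Definition rx n M (c : code n M) (w : msgs M) (s : {ffun 'I_n -> state}) (k : 'I_K)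
  : {ffun 'I_n -> output} := [ffun t => chan_out (tx c w s t) (s t k)].

Definition err_prob (P : state -> R) n M (c : code n M) : R :=
  \sum_(w : msgs M) \sum_(s : {ffun 'I_n -> state})
    ((\prod_(k < K) (M k)%:R)^-1 * (\prod_(t < n) P (s t)) *
     (if [exists k : 'I_K, @dec n M c k (rx c w s k) s != w k] then 1 else 0)).

Definition msize (n : nat) (r : R) : nat :=
  maxn 1 (Num.truncn (powR (#|F|%:R : R) (n%:R * r))).

Definition achievable (P : state -> R) (rate : 'I_K -> R) : Prop :=
  forall eps : R, 0 < eps -> exists N0 : nat, forall n : nat, (N0 <= n)%N ->
    exists c : code n (fun k => msize n (rate k)), err_prob P c <= eps.

Definition prob_tail_max (P : state -> R) (pi : {perm 'I_K}) (k : 'I_K) (q : nat) : R :=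
  \sum_(N : state | [exists j : 'I_K, (k <= j)%N && (q <= N (pi j))%N]) P N.

End LPEBC.

(* Main.v *)
Require Import Defs.
From HB Require Import structures.
From mathcomp Require Import all_boot all_order all_algebra all_fingroup all_field.
From mathcomp Require Import all_classical all_reals all_analysis.
From mathcomp Require Import ring lra.
Import Order.TTheory GRing.Theory Num.Theory.
Local Open Scope ring_scope.
Set Implicit Arguments. Unset Strict Implicit. Unset Printing Implicit Defensive.
Section Ent.
Variables (R : realType) (T : finType) (mu : T -> R).
Hypothesis mu0 : forall x, 0 <= mu x.

Definition cm (B : eqType) (g : T -> B) (x : T) : R := \sum_(y | g y == g x) mu y.
Definition pr2 (A B : Type) (f : T -> A) (g : T -> B) : T -> A * B := fun x => (f x, g x).
Definition H (A B : eqType) (f : T -> A) (g : T -> B) : R :=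
  \sum_x mu x * ln (cm g x / cm (pr2 f g) x).

Lemma cmE (B : eqType) (g : T -> B) x : cm g x = \sum_y mu y * (g y == g x)%:R.
Proof. by rewrite /cm big_mkcond; apply: eq_bigr => y _; case: ifP; rewrite ?mulr1 ?mulr0. Qed.

Lemma cm_ge (B : eqType) (g : T -> B) x : mu x <= cm g x.
Proof. by rewrite /cm (bigD1 x) //= lerDl sumr_ge0. Qed.

Lemma cm_ge0 (B : eqType) (g : T -> B) x : 0 <= cm g x.
Proof. exact: le_trans (mu0 x) (cm_ge g x). Qed.

Lemma cm_gt0 (B : eqType) (g : T -> B) x : 0 < mu x -> 0 < cm g x.
Proof. by move=> h; apply: lt_le_trans h (cm_ge g x). Qed.

Lemma cm_ext (B B' : eqType) (g : T -> B) (g' : T -> B') x :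
  (forall y, (g y == g x) = (g' y == g' x)) -> cm g x = cm g' x.
Proof. by move=> h; apply: eq_bigl. Qed.

Lemma cm_sub (B B' : eqType) (g : T -> B) (h : T -> B') x :
  (forall y, g y == g x -> h y == h x) -> cm g x <= cm h x.
Proof.
move=> hyp; rewrite /cm [X in X <= _]big_mkcond [X in _ <= X]big_mkcond /=.
apply: ler_sum => y _; case: ifP => [/hyp -> //|_]; case: ifP => //.
Qed.

Lemma mu_cases x : mu x = 0 \/ 0 < mu x.
Proof. by have := mu0 x; rewrite le0r => /orP [/eqP ->|]; [left|right]. Qed.

Lemma H_ge0 (A B : eqType) (f : T -> A) (g : T -> B) : 0 <= H f g.
Proof.
apply: sumr_ge0 => x _; case: (mu_cases x) => [->|mp]; first by rewrite mul0r.
apply: mulr_ge0 => //; apply: ln_ge0.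
rewrite ler_pdivlMr ?mul1r; last exact: cm_gt0.
by apply: cm_sub => y; rewrite /pr2 xpair_eqE => /andP [].
Qed.

Lemma H_chain (A1 A2 B : eqType) (f1 : T -> A1) (f2 : T -> A2) (g : T -> B) :
  H (pr2 f1 f2) g = H f2 g + H f1 (pr2 f2 g).
Proof.
rewrite /H -big_split /=; apply: eq_bigr => x _; rewrite -mulrDr.
case: (mu_cases x) => [->|mp]; first by rewrite !mul0r.
congr (_ * _).
have -> : cm (pr2 (pr2 f1 f2) g) x = cm (pr2 f1 (pr2 f2 g)) x.
  by apply: cm_ext => y; rewrite /pr2 !xpair_eqE andbA.
have ha := cm_gt0 g mp; have hb := cm_gt0 (pr2 f2 g) mp.
have hc := cm_gt0 (pr2 f1 (pr2 f2 g)) mp.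
rewrite -lnM ?posrE ?divr_gt0 //; congr ln.
by rewrite mulrA divfK // gt_eqF.
Qed.

Lemma H_ext (A B A' B' : eqType) (f : T -> A) (g : T -> B) (f' : T -> A') (g' : T -> B') :
  (forall x y, (g y == g x) = (g' y == g' x)) ->
  (forall x y, (f y == f x) && (g y == g x) = (f' y == f' x) && (g' y == g' x)) ->
  H f g = H f' g'.
Proof.
move=> h1 h2; rewrite /H; apply: eq_bigr => x _.
rewrite (@cm_ext _ _ g g' x (h1 x)).
by rewrite (@cm_ext _ _ (pr2 f g) (pr2 f' g') x) // => y; rewrite /pr2 !xpair_eqE h2.
Qed.

Lemma sum_div_le1 (P : pred T) (c : R) :
  \sum_(x | P x) mu x <= c -> \sum_(x | P x) (mu x / c) <= 1.
Proof.
move=> hc; rewrite -mulr_suml.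
have s0 : 0 <= \sum_(x | P x) mu x by apply: sumr_ge0.
have [->|c0] := eqVneq c 0; first by rewrite invr0 mulr0.
have cp : 0 < c by rewrite lt_def c0 (le_trans s0 hc).
by rewrite ler_pdivrMr // mul1r.
Qed.

Lemma ln_lb (y : R) : 0 < y -> 1 - y^-1 <= ln y.
Proof.
move=> yp; have := @le_ln1Dx R (y^-1 - 1).
rewrite addrCA subrr addr0 lnV ?posrE // => h.
have : ln y >= 1 - y^-1.
  rewrite -[ln y]opprK lerNr opprB; apply: h.
  by rewrite ltrBrDr addNr invr_gt0.
by [].
Qed.

End Ent.
Section Ent2.
Variables (R : realType) (T : finType) (mu : T -> R).
Hypothesis mu0 : forall x, 0 <= mu x.
Local Notation cm := (cm mu).
Local Notation H := (H mu).

Lemma Tsum_le (A B C : eqType) (f : T -> A) (g : T -> B) (h : T -> C) :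
  \sum_x mu x * (cm (pr2 f h) x * cm (pr2 g h) x / (cm h x * cm (pr2 f (pr2 g h)) x))
  <= \sum_x mu x.
Proof.
set fh := pr2 f h; set gh := pr2 g h; set fgh := pr2 f (pr2 g h).
pose G x y z := mu y * mu z * (mu x * (fh y == fh x)%:R * (gh z == gh x)%:R
                                  / (cm h x * cm fgh x)).
have E1 : forall x, mu x * (cm fh x * cm gh x / (cm h x * cm fgh x))
                 = \sum_y \sum_z G x y z.
  move=> x; rewrite (cmE mu fh) (cmE mu gh) big_distrl /= big_distrl /= big_distrr /=.
  apply: eq_bigr => y _; rewrite big_distrr /= big_distrl /= big_distrr /=.
  by apply: eq_bigr => z _; rewrite /G; ring.
under eq_bigr do rewrite E1.
rewrite exchange_big /=.
under eq_bigr do rewrite exchange_big /=.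
have inner : forall y z, \sum_x G x y z <= mu y * mu z * ((h z == h y)%:R / cm h y).
  move=> y z; rewrite /G -big_distrr /=; apply: ler_wpM2l.
    by apply: mulr_ge0.
  have [hzy|nhzy] := eqVneq (h z) (h y); last first.
    rewrite big1 ?mul0r // => x _.
    case E: (fh y == fh x); case E': (gh z == gh x); rewrite ?mulr0 ?mul0r //.
    move: E E'; rewrite /fh /gh /pr2 !xpair_eqE => /andP [_ /eqP a] /andP [_ /eqP b].
    by move: nhzy; rewrite a b eqxx.
  rewrite mul1r.
  pose Ex x := (f x == f y) && (g x == g z) && (h x == h y).
  pose c := \sum_(x | Ex x) mu x.
  rewrite (bigID Ex) /= [X in _ + X]big1 ?addr0; last first.
    move=> x nE; case E: (fh y == fh x); case E': (gh z == gh x); rewrite ?mulr0 ?mul0r //.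
    move: E E' nE; rewrite /fh /gh /pr2 /Ex !xpair_eqE => /andP [/eqP a /eqP b] /andP [/eqP d /eqP e].
    by rewrite a b d !eqxx.
  have -> : \sum_(x | Ex x) (mu x * (fh y == fh x)%:R * (gh z == gh x)%:R / (cm h x * cm fgh x))
          = (cm h y)^-1 * \sum_(x | Ex x) (mu x / c).
    rewrite big_distrr /=; apply: eq_bigr => x.
    rewrite /Ex => /andP [/andP [/eqP a /eqP b] /eqP d].
    have -> : fh y == fh x by rewrite /fh /pr2 a d.
    have -> : gh z == gh x by rewrite /gh /pr2 b d hzy.
    have -> : cm h x = cm h y by rewrite /cm d.
    have -> : cm fgh x = c.
      rewrite /cm /c; apply: eq_bigl => w; rewrite /fgh /pr2 /Ex !xpair_eqE a b d.
      by rewrite andbA.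
    by rewrite !mulr1 invfM; ring.
  rewrite -[X in _ <= X]mulr1; apply: ler_wpM2l; first by rewrite invr_ge0 cm_ge0.
  exact: sum_div_le1.
apply: le_trans (ler_sum _ (fun y _ => ler_sum _ (fun z _ => inner y z))) _.
apply: ler_sum => y _.
have -> : \sum_z mu y * mu z * ((h z == h y)%:R / cm h y) = mu y * (cm h y / cm h y).
  rewrite cmE !big_distrl /= big_distrr /=; apply: eq_bigr => z _; ring.
have [->|c0] := eqVneq (cm h y) 0; first by rewrite mul0r mulr0.
by rewrite divff // mulr1.
Qed.

End Ent2.
Section Ent3.
Variables (R : realType) (T : finType) (mu : T -> R).
Hypothesis mu0 : forall x, 0 <= mu x.
Local Notation cm := (cm mu).
Local Notation H := (H mu).

Lemma H_mono (A B C : eqType) (f : T -> A) (g : T -> B) (h : T -> C) :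
  H f (pr2 g h) <= H f h.
Proof.
rewrite -subr_ge0 /H -sumrB.
have step : forall x, mu x - mu x * (cm (pr2 f h) x * cm (pr2 g h) x / (cm h x * cm (pr2 f (pr2 g h)) x))
   <= mu x * ln (cm h x / cm (pr2 f h) x) - mu x * ln (cm (pr2 g h) x / cm (pr2 f (pr2 g h)) x).
  move=> x; case: (mu_cases mu0 x) => [->|mp]; first by rewrite !mul0r subrr.
  have ha := cm_gt0 mu0 h mp; have hb := cm_gt0 mu0 (pr2 f h) mp.
  have hc := cm_gt0 mu0 (pr2 g h) mp; have hd := cm_gt0 mu0 (pr2 f (pr2 g h)) mp.
  set a := cm h x in ha *; set b := cm (pr2 f h) x in hb *.
  set c := cm (pr2 g h) x in hc *; set d := cm (pr2 f (pr2 g h)) x in hd *.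
  rewrite -mulrBr -[X in X - _]mulr1 -mulrBr; apply: ler_wpM2l; first exact: ltW.
  rewrite -ln_div ?posrE ?divr_gt0 //.
  have -> : b * c / (a * d) = (a / b / (c / d))^-1.
    rewrite invf_div; field.
    by rewrite !gt_eqF.
  by apply: ln_lb; rewrite !divr_gt0.
apply: le_trans (ler_sum _ (fun x _ => step x)).
by rewrite sumrB subr_ge0; exact: Tsum_le.
Qed.

Lemma ln_ub (y : R) : 0 < y -> ln y <= y - 1.
Proof.
move=> yp; have := @le_ln1Dx R (y - 1).
rewrite addrCA subrr addr0; apply.
by rewrite ltrBrDr addNr.
Qed.

Lemma Key_range (A : finType) (B : eqType) (f : T -> A) (g : T -> B) (S : pred T) :
  (forall x y, g x = g y -> S x = S y) ->
  \sum_(x | S x) mu x * (cm g x / cm (pr2 f g) x) <= #|A|%:R * \sum_(x | S x) mu x.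
Proof.
move=> hS.
have E1 : \sum_(x | S x) mu x * (cm g x / cm (pr2 f g) x)
   = \sum_y mu y * \sum_(x | S x) (mu x * (g y == g x)%:R / cm (pr2 f g) x).
  transitivity (\sum_(x | S x) \sum_y mu y * (mu x * (g y == g x)%:R / cm (pr2 f g) x)).
    apply: eq_bigr => x _; rewrite (cmE mu g) !big_distrl /= big_distrr /=.
    by apply: eq_bigr => y _; ring.
  by rewrite exchange_big /=; apply: eq_bigr => y _; rewrite big_distrr.
rewrite E1.
have inner : forall y, \sum_(x | S x) (mu x * (g y == g x)%:R / cm (pr2 f g) x)
               <= #|A|%:R * (S y)%:R.
  move=> y; case Sy: (S y); last first.
    rewrite mulr0 big1 // => x Sx; case E: (g y == g x); last by rewrite mulr0 mul0r.
    by move: Sx; rewrite -(hS _ _ (eqP E)) Sy.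
  rewrite mulr1.
  apply: le_trans (_ : \sum_x (mu x * (g y == g x)%:R / cm (pr2 f g) x) <= _).
    rewrite [X in _ <= X](bigID S) /= lerDl; apply: sumr_ge0 => x _.
    by rewrite !mulr_ge0 ?invr_ge0 ?cm_ge0.
  rewrite (partition_big f xpredT) //=.
  have -> : #|A|%:R = \sum_(a : A) (1 : R) by rewrite sumr_const.
  apply: ler_sum => a _.
  pose c := \sum_(x | (f x == a) && (g x == g y)) mu x.
  rewrite (bigID (fun x => g x == g y)) /= [X in _ + X]big1 ?addr0; last first.
    by move=> x /andP [_ ne]; rewrite eq_sym (negbTE ne) mulr0 mul0r.
  have -> : \sum_(i | (f i == a) && (g i == g y)) (mu i * (g y == g i)%:R / cm (pr2 f g) i)
         = \sum_(i | (f i == a) && (g i == g y)) (mu i / c).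
    apply: eq_bigr => x /andP [/eqP fa /eqP gy]; rewrite gy eqxx mulr1; congr (_ / _).
    by rewrite /cm /c; apply: eq_bigl => w; rewrite /pr2 xpair_eqE fa gy.
  exact: sum_div_le1.
apply: le_trans (ler_sum _ (fun y _ => ler_wpM2l (mu0 y) (inner y))) _.
rewrite big_distrr /= [X in _ <= X]big_mkcond /=; apply: ler_sum => y _.
by case: (S y); rewrite ?mulr1 ?mulr0 // mulrC.
Qed.

Lemma H_range (A : finType) (B : eqType) (f : T -> A) (g : T -> B) (S : pred T) :
  (forall x y, g x = g y -> S x = S y) ->
  \sum_(x | S x) mu x * ln (cm g x / cm (pr2 f g) x) <= (\sum_(x | S x) mu x) * ln #|A|%:R.
Proof.
move=> hS; set N : R := #|A|%:R.
have step : forall x, S x -> mu x * ln (cm g x / cm (pr2 f g) x)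
    <= N^-1 * (mu x * (cm g x / cm (pr2 f g) x)) - mu x + mu x * ln N.
  move=> x _; case: (mu_cases mu0 x) => [->|mp]; first by rewrite !mul0r !mulr0 subrr add0r.
  have Np : 0 < N by rewrite ltr0n; apply/card_gt0P; exists (f x).
  have ha := cm_gt0 mu0 g mp; have hb := cm_gt0 mu0 (pr2 f g) mp.
  set a := cm g x in ha *; set b := cm (pr2 f g) x in hb *.
  have -> : ln (a / b) = ln (N^-1 * (a / b)) + ln N.
    rewrite -lnM ?posrE ?mulr_gt0 ?invr_gt0 ?divr_gt0 //; congr ln.
    by rewrite mulrAC mulVf ?mul1r // gt_eqF.
  have := ln_ub (y := N^-1 * (a / b)); rewrite mulr_gt0 ?invr_gt0 ?divr_gt0 // => /(_ isT) h.
  rewrite mulrDr lerD2r.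
  rewrite [X in _ <= X - _]mulrCA -[X in _ <= _ - X]mulr1 -mulrBr.
  apply: ler_wpM2l; [exact: ltW | exact: h].
apply: le_trans (ler_sum _ step) _.
rewrite big_split /= sumrB -big_distrl /= -big_distrr /= -[X in _ <= X]add0r lerD2r subr_le0.
have K := Key_range f hS; rewrite -/N in K.
have [N0|Nn0] := eqVneq N 0; first by rewrite N0 invr0 mul0r sumr_ge0.
have Np : 0 < N by rewrite lt_def Nn0 ler0n.
by rewrite mulrC ler_pdivrMr // mulrC.
Qed.
End Ent3.
Section Ent4.
Variables (R : realType) (T : finType) (mu : T -> R).
Hypothesis mu0 : forall x, 0 <= mu x.
Local Notation cm := (cm mu).
Local Notation H := (H mu).

Lemma H_func (A B C : eqType) (f : T -> A) (g : T -> B) (h : T -> C) :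
  (forall x y, g x = g y -> h x = h y) -> H f g <= H f h.
Proof.
move=> hf; apply: le_trans (H_mono mu0 f g h).
rewrite le_eqVlt; apply/orP; left; apply/eqP; apply: H_ext.
  move=> x y; rewrite /pr2 xpair_eqE; case E: (g y == g x) => //=.
  by rewrite (hf _ _ (eqP E)) eqxx.
move=> x y; rewrite /pr2 xpair_eqE; case E: (g y == g x); rewrite ?andbF //=.
by rewrite (hf _ _ (eqP E)) eqxx.
Qed.

Lemma H_det (A B : eqType) (f : T -> A) (g : T -> B) :
  (forall x y, g x = g y -> f x = f y) -> H f g = 0.
Proof.
move=> hf; apply: big1 => x _.
case: (mu_cases mu0 x) => [->|mp]; first by rewrite mul0r.
have -> : cm (pr2 f g) x = cm g x.
  apply: cm_ext => y; rewrite /pr2 xpair_eqE; case E: (g y == g x); rewrite ?andbF //.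
  by rewrite (hf _ _ (eqP E)) eqxx.
by rewrite divff ?ln1 ?mulr0 // gt_eqF // cm_gt0.
Qed.

Variables (S : finType) (A : eqType) (s : T -> S) (U : T -> A) (rho : S -> R).
Hypothesis rho_sum : \sum_a rho a = 1.
Variable tau : S -> S -> T -> T.
Hypothesis tau_inj : forall a b, injective (tau a b).
Hypothesis tau_s : forall a b x, (s (tau a b x) == b) = (s x == a).
Hypothesis tau_U : forall a b x, U (tau a b x) = U x.
Hypothesis tau_mu : forall a b x, s x = a -> rho a * mu (tau a b x) = rho b * mu x.

Lemma indep (G : T -> R) : (forall x y, U x = U y -> G x = G y) ->
  forall a, \sum_x mu x * G x * (s x == a)%:R = rho a * \sum_x mu x * G x.
Proof.
move=> hG a.
have E : forall b, rho a * \sum_x mu x * G x * (s x == b)%:R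
                 = rho b * \sum_x mu x * G x * (s x == a)%:R.
  move=> b; rewrite (reindex_inj (@tau_inj a b)) /= !big_distrr /=.
  apply: eq_bigr => x _; rewrite tau_s (hG _ _ (tau_U a b x)).
  case: (eqVneq (s x) a) => [sa|]; last by rewrite !mulr0.
  by rewrite !mulr1 !mulrA tau_mu.
have E2 : \sum_b rho a * (\sum_x mu x * G x * (s x == b)%:R)
         = \sum_b rho b * (\sum_x mu x * G x * (s x == a)%:R).
  by apply: eq_bigr => b _; exact: E.
move: E2; rewrite -big_distrr /= -big_distrl /= rho_sum mul1r => <-.
congr (_ * _); rewrite exchange_big /=; apply: eq_bigr => x _.
rewrite -big_distrr /= (bigD1 (s x)) //= eqxx big1 ?addr0 ?mulr1 //.
by move=> b /negbTE; rewrite eq_sym => ->.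
Qed.

Definition Umeas (B : eqType) (h : T -> B) := forall x y, U x = U y -> h x = h y.

Lemma cm_indep (B : eqType) (h : T -> B) : Umeas h ->
  forall x, cm (pr2 s h) x = rho (s x) * cm h x.
Proof.
move=> hh x; rewrite !cmE -(indep (G := fun y => (h y == h x)%:R)).
  apply: eq_bigr => y _; rewrite /pr2 xpair_eqE.
  by case: (s y == s x); case: (h y == h x); rewrite ?mulr1 ?mulr0.
by move=> y z /hh ->.
Qed.

Lemma H_s_indep (B : eqType) (h : T -> B) : Umeas h ->
  H s h = \sum_x mu x * ln (rho (s x))^-1.
Proof.
move=> hh; apply: eq_bigr => x _.
case: (mu_cases mu0 x) => [->|mp]; first by rewrite !mul0r.
rewrite cm_indep // invfM mulrCA divff ?mulr1 // gt_eqF // cm_gt0 //.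
Qed.

Lemma Umeas_cm (B : eqType) (h : T -> B) : Umeas h -> Umeas (cm h).
Proof. by move=> hh x y /hh e; rewrite /cm e. Qed.

Lemma Umeas_pr2 (B C : eqType) (f : T -> B) (h : T -> C) : Umeas f -> Umeas h -> Umeas (pr2 f h).
Proof. by move=> hf hh x y e; rewrite /pr2 (hf _ _ e) (hh _ _ e). Qed.

Lemma H_layer (B C D E : eqType) (Y : T -> B) (g : T -> C) (f : T -> D) (h : T -> E)
  (phi : pred S) : Umeas f -> Umeas h ->
  (forall x, ~~ phi (s x) -> forall y, g y = g x -> Y y = Y x) ->
  (forall x, phi (s x) -> forall y, (g y == g x) = (s y == s x) && (h y == h x)) ->
  (forall x, phi (s x) -> forall y,
      (Y y == Y x) && (g y == g x) = (s y == s x) && ((f y == f x) && (h y == h x))) ->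
  H Y g = (\sum_(a | phi a) rho a) * H f h.
Proof.
move=> hf hh h1 h2 h3.
pose L x := ln (cm h x / cm (pr2 f h) x).
have UL : forall x y, U x = U y -> L x = L y.
  move=> x y e; rewrite /L (Umeas_cm hh e) (Umeas_cm (Umeas_pr2 hf hh) e) //.
have T1 : forall x, mu x * ln (cm g x / cm (pr2 Y g) x) = mu x * L x * (phi (s x))%:R.
  move=> x; case: (mu_cases mu0 x) => [->|mp]; first by rewrite !mul0r.
  case P: (phi (s x)); last first.
    rewrite mulr0 (_ : cm (pr2 Y g) x = cm g x) ?divff ?ln1 ?mulr0 ?gt_eqF ?cm_gt0 //.
    apply: cm_ext => y; rewrite /pr2 xpair_eqE; case Eg: (g y == g x); rewrite ?andbF //.
    by rewrite (h1 x (negbT P) y (eqP Eg)) eqxx.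
  rewrite mulr1 /L.
  have -> : cm g x = cm (pr2 s h) x by apply: cm_ext => y; rewrite h2 // /pr2 xpair_eqE.
  have -> : cm (pr2 Y g) x = cm (pr2 s (pr2 f h)) x.
    by apply: cm_ext => y; rewrite /pr2 !xpair_eqE h3.
  rewrite !cm_indep //; last exact: Umeas_pr2.
  have rp : rho (s x) != 0.
    apply/negP => /eqP r0; have := cm_gt0 mu0 (pr2 s h) mp.
    by rewrite cm_indep // r0 mul0r ltxx.
  by rewrite invfM mulrACA divff ?mul1r.
rewrite /H (eq_bigr _ (fun x _ => T1 x)).
have -> : \sum_x mu x * L x * (phi (s x))%:R
        = \sum_(a | phi a) \sum_x mu x * L x * (s x == a)%:R.
  rewrite exchange_big /=; apply: eq_bigr => x _; rewrite -big_distrr /=.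
  congr (_ * _); case P: (phi (s x)).
    rewrite (bigD1 (s x)) //= eqxx big1 ?addr0 //.
    by move=> b /andP [_ /negbTE]; rewrite eq_sym => ->.
  rewrite big1 // => b pb; case: eqP => // e; by move: P; rewrite e pb.
rewrite big_distrl /=; apply: eq_bigr => a _; rewrite indep //.
Qed.

End Ent4.
Section Pref.
Variables (R : realType) (T : finType) (mu : T -> R).
Hypothesis mu0 : forall x, 0 <= mu x.
Variables (n' : nat) (B : eqType) (e : 'I_n' -> T -> B).

Definition pref (m : nat) (x : T) : {ffun 'I_n' -> option B} :=
  [ffun i : 'I_n' => if (i < m)%N then Some (e i x) else None].

Lemma pref_eq m y x : (pref m y == pref m x) = [forall i : 'I_n', (i < m)%N ==> (e i y == e i x)].
Proof.
apply/eqP/forallP => [E i|E].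
  apply/implyP => him; have := congr1 (fun f : {ffun 'I_n' -> option B} => f i) E; rewrite !ffunE him.
  by move=> [->].
apply/ffunP => i; rewrite !ffunE; case: ifP => // him.
by have := E i; rewrite him => /eqP ->.
Qed.

Lemma H_pref (C : eqType) (g : T -> C) m : (m <= n')%N ->
  H mu (pref m) g = \sum_(i < n' | (i < m)%N) H mu (e i) (pr2 (pref i) g).
Proof.
elim: m => [_|m IH hm].
  rewrite big_pred0 ?H_det // => x y _; apply/ffunP => i; rewrite !ffunE.
have hm' : (m < n')%N by [].
pose i0 := Ordinal hm'.
have -> : H mu (pref m.+1) g = H mu (pr2 (e i0) (pref m)) g.
  apply: H_ext => // x y; rewrite /pr2 xpair_eqE; congr (_ && _).
  rewrite !pref_eq; apply/forallP/andP => [E|[E1 /forallP E2] i].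
    split; first by have := E i0; rewrite ltnSn.
    apply/forallP => i; apply/implyP => him; have := E i.
    by rewrite ltnS (ltnW him).
  apply/implyP; rewrite ltnS leq_eqVlt => /orP [/eqP hi|hi].
    by have -> : i = i0 by apply: val_inj.
  by have := E2 i; rewrite hi.
rewrite (H_chain mu0) IH ?(ltnW hm) // addrC [RHS](bigD1 i0) //=; congr (_ + _).
apply: eq_bigl => i; apply/idP/andP => [him|[h1 h2]].
  split; first by rewrite ltnS ltnW.
  by apply/eqP => E; move: him; rewrite E /= ltnn.
rewrite ltnS leq_eqVlt in h1; case/orP: h1 => // /eqP hi.
by move: h2; rewrite (_ : i = i0) ?eqxx //; apply: val_inj.

Qed.

End Pref.
Section Chan.
Variables (R : realType) (F : finFieldType) (K Q : nat) (P : state K Q -> R).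
Hypothesis hP0 : forall N, 0 <= P N.
Hypothesis hP1 : \sum_N P N = 1.
Variable pi : {perm 'I_K}.
Variables (n : nat) (M : 'I_K -> nat) (c : Defs.code F Q n M).
Hypothesis Mpos : forall k, (0 < M k)%N.

Definition Om := (msgs M * {ffun 'I_n -> state K Q})%type.
Definition mu (x : Om) : R := (\prod_k (M k)%:R)^-1 * \prod_t P (x.2 t).

Lemma mu0 x : 0 <= mu x.
Proof.
apply: mulr_ge0; last by apply: prodr_ge0.
by rewrite invr_ge0; apply: prodr_ge0 => k _; rewrite ler0n.
Qed.

Lemma prodM_neq0 : \prod_k (M k)%:R != 0 :> R.
Proof. by apply/prodf_neq0 => k _; rewrite pnatr_eq0 -lt0n Mpos. Qed.

Lemma mu_sum : \sum_x mu x = 1.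
Proof.
rewrite -(pair_bigA _ (fun w s => mu (w, s))) /=.
have E : forall w : msgs M, \sum_(s : {ffun 'I_n -> state K Q}) mu (w, s) = (\prod_k (M k)%:R)^-1.
  move=> w; rewrite /mu /= -big_distrr /= -(bigA_distr_bigA (fun (_ : 'I_n) (N : state K Q) => P N)) /=.
  by rewrite [X in _ * X]big1 ?mulr1 // => t _; exact: hP1.
rewrite (eq_bigr _ (fun w _ => E w)) sumr_const card_dep_ffun foldrE big_map big_enum /=.
rewrite -mulr_natl natr_prod.
under eq_bigr do rewrite card_ord.
by rewrite mulfV // prodM_neq0.
Qed.


Lemma err_eq : err_prob P c =
  \sum_x mu x * ([exists k, dec c k (rx c x.1 x.2 k) x.2 != x.1 k])%:R.
Proof.
rewrite /err_prob pair_bigA /=; apply: eq_bigr => -[w s] _; rewrite /mu /=.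
by case: ifP.
Qed.

Definition Lv (j : nat) (N : state K Q) : nat := \max_(i : 'I_K | (j <= i)%N) (N (pi i) : nat).

Lemma Lv_gt j (q : nat) (N : state K Q) : (q < Lv j N)%N = [exists i : 'I_K, (j <= i)%N && (q < N (pi i))%N].
Proof.
apply/idP/idP => [h|/existsP [i /andP [hi hq]]].
  have [//|/existsPn hn] := boolP [exists i : 'I_K, (j <= i)%N && (q < N (pi i))%N].
  exfalso; move: h; rewrite ltnNge => /negP; apply.
  apply/bigmax_leqP => i hi; have := hn i; rewrite hi /= -leqNgt; exact.
by apply: leq_trans hq _; exact: (@leq_bigmax_cond _ _ (fun i : 'I_K => (N (pi i) : nat)) _ hi).
Qed.

Lemma Lv_mono j j' (N : state K Q) : (j <= j')%N -> (Lv j' N <= Lv j N)%N.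
Proof.
move=> hj; apply/bigmax_leqP => i hi.
exact: (@leq_bigmax_cond _ _ (fun i : 'I_K => (N (pi i) : nat)) _ (leq_trans hj hi)).
Qed.

Lemma Lv_ge j (N : state K Q) (k : 'I_K) : (j <= k)%N -> (N (pi k) <= Lv j N)%N.
Proof. by move=> h; exact: (@leq_bigmax_cond _ _ (fun i : 'I_K => (N (pi i) : nat)) _ h). Qed.

Definition xq (x : Om) (t : 'I_n) : input F Q := tx c x.1 x.2 t.
Definition Yrow (j : nat) (x : Om) (t : 'I_n) : {ffun 'I_Q -> option F} :=
  [ffun q : 'I_Q => if (q < Lv j (x.2 t))%N then Some (xq x t q) else None].
Definition et (j : nat) (t : 'I_n) : Om -> ({ffun 'I_Q -> option F} * state K Q) :=
  pr2 (fun x => Yrow j x t) (fun x : Om => x.2 t).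
Definition Pi (j m : nat) := pref (et j) m.
Definition V (m : nat) (x : Om) : {ffun 'I_K -> nat} :=
  [ffun k : 'I_K => if (m <= k)%N then val (x.1 (pi k)) else 0%N].
Definition Ut (t : 'I_n) (x : Om) :=
  (x.1, [ffun i : 'I_n => if (i < t)%N then Some (x.2 i) else None]).
Definition Yq j t (q : 'I_Q) (x : Om) := Yrow j x t q.
Definition Xq t (q : 'I_Q) (x : Om) := xq x t q.
Definition st (t : 'I_n) (x : Om) := x.2 t.

Lemma Ut_eq (t : 'I_n) (x y : Om) : Ut t x = Ut t y -> x.1 = y.1 /\ forall i : 'I_n, (i < t)%N -> x.2 i = y.2 i.
Proof.
case=> e1 e2; split => // i hi.
by have := congr1 (fun f : {ffun 'I_n -> option (state K Q)} => f i) e2; rewrite !ffunE hi => -[].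
Qed.

Lemma xq_U (t : 'I_n) (x y : Om) (i : 'I_n) : (i <= t)%N -> Ut t x = Ut t y -> xq x i = xq y i.
Proof.
move=> hi /Ut_eq [e1 e2]; rewrite /xq /tx e1; congr (enc c _ _).
apply/ffunP => k; rewrite !ffunE; apply: e2 => /=.
exact: leq_trans (ltn_ord k) hi.
Qed.

Lemma Yrow_U j (t : 'I_n) (x y : Om) (i : 'I_n) : (i < t)%N -> Ut t x = Ut t y -> Yrow j x i = Yrow j y i.
Proof.
move=> hi hU; have [_ e2] := Ut_eq hU.
by apply/ffunP => q; rewrite !ffunE (e2 _ hi) (xq_U (ltnW hi) hU).
Qed.

Lemma Pi_U j (t : 'I_n) (x y : Om) : Ut t x = Ut t y -> Pi j t x = Pi j t y.
Proof.
move=> hU; have [_ e2] := Ut_eq hU; apply/ffunP => i; rewrite !ffunE.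
case: ifP => // hi; rewrite /et /pr2 (e2 _ hi) (Yrow_U j hi hU) //.
Qed.

Lemma V_U m (t : 'I_n) (x y : Om) : Ut t x = Ut t y -> V m x = V m y.
Proof. by move=> /Ut_eq [e1 _]; rewrite /V e1. Qed.

Lemma YqE j t (q : 'I_Q) (x : Om) : (q < Lv j (x.2 t))%N -> Yq j t q x = Some (Xq t q x).
Proof. by move=> h; rewrite /Yq /Yrow ffunE h. Qed.

Lemma YqN j t (q : 'I_Q) (x : Om) : ~~ (q < Lv j (x.2 t))%N -> Yq j t q x = None.
Proof. by move=> h; rewrite /Yq /Yrow ffunE (negbTE h). Qed.

Definition swapS (a b v : state K Q) := if v == a then b else if v == b then a else v.

Lemma swapS_eq a b v : (swapS a b v == b) = (v == a).
Proof.
rewrite /swapS; case: (eqVneq v a) => [_|va]; first by rewrite eqxx.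
case: (eqVneq v b) => [vb|vb] /=; last by rewrite (negbTE vb).
by rewrite -vb eq_sym (negbTE va).
Qed.

Lemma swapSK a b v : swapS a b (swapS a b v) = v.
Proof.
rewrite /swapS; case: (eqVneq v a) => [->|va].
  by case: (eqVneq b a) => [->|ba]; rewrite ?eqxx.
case: (eqVneq v b) => [->|vb]; first by rewrite eqxx.
by rewrite (negbTE va) (negbTE vb).
Qed.

Definition stau (t : 'I_n) (a b : state K Q) (x : Om) : Om :=
  (x.1, [ffun i => if i == t then swapS a b (x.2 t) else x.2 i]).

Lemma stauK t a b : cancel (stau t a b) (stau t a b).
Proof.
case=> w s; rewrite /stau /=; congr pair; apply/ffunP => i; rewrite !ffunE eqxx swapSK.
by case: eqP => [->|].
Qed.

Lemma stau_s t a b x : (st t (stau t a b x) == b) = (st t x == a).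
Proof. by rewrite /st /stau /= ffunE eqxx swapS_eq. Qed.

Lemma stau_U t a b x : Ut t (stau t a b x) = Ut t x.
Proof.
rewrite /Ut /stau /=; congr pair; apply/ffunP => i; rewrite !ffunE.
case: ifP => // hi; case: eqP => // e; by move: hi; rewrite e ltnn.
Qed.

Lemma stau_mu t a b x : st t x = a -> P a * mu (stau t a b x) = P b * mu x.
Proof.
move=> hx; rewrite /mu /stau /= (bigD1 t) //= [in RHS](bigD1 t) //= ffunE eqxx.
rewrite /st in hx; rewrite hx /swapS eqxx.
rewrite (eq_bigr (fun i => P (x.2 i))); last by move=> i /negbTE hi; rewrite ffunE hi.
ring.
Qed.

Lemma rho_P : \sum_a P a = 1. Proof. exact: hP1. Qed.

Definition prob j (q : nat) := \sum_(N | (q < Lv j N)%N) P N.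
Definition AA j m (t : 'I_n) (q : 'I_Q) :=
  H mu (Xq t q) (pr2 (pref (Xq t) q) (pr2 (Pi j t) (V m))).

Lemma layer j m (t : 'I_n) (q : 'I_Q) :
  H mu (Yq j t q) (pr2 (pref (Yq j t) q) (pr2 (st t) (pr2 (Pi j t) (V m))))
  = prob j q * AA j m t q.
Proof.
rewrite /prob /AA.
apply:  (@H_layer _ _ mu mu0 _ _ (st t) (Ut t) P rho_P (stau t)
          (fun a b => can_inj (@stauK t a b)) (@stau_s t) (@stau_U t) (@stau_mu t)
          _ _ _ _ _ _ _ _ (fun N : state K Q => (q < Lv j N)%N)).
- by move=> x y e; rewrite /Xq (xq_U (leqnn t) e).
- move=> x y e; rewrite /pr2 (Pi_U j e) (V_U m e); congr pair.
  by apply/ffunP => i; rewrite !ffunE /Xq (xq_U (leqnn t) e).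
- move=> x hx y; rewrite /pr2 => -[_ ey _ _].
  rewrite !YqN //; rewrite /st in ey hx; by rewrite ey.
- move=> x hx y; rewrite /pr2 !xpair_eqE.
  case: (eqVneq (st t y) (st t x)) => [ey|ney]; last by rewrite /= andbF.
  rewrite /=; congr (_ && _); rewrite !pref_eq; apply: eq_forallb => q'.
  case: (ltnP q' q) => //= hq'; rewrite /st in ey hx.
  by rewrite !YqE // ?ey (ltn_trans hq' hx).
- move=> x hx y; rewrite /pr2 !xpair_eqE.
  case: (eqVneq (st t y) (st t x)) => [ey|ney]; last by rewrite /= !andbF.
  rewrite /st in ey hx; rewrite !YqE ?ey //= andbA [in RHS]andbA; congr (_ && _).
  congr (_ && _); rewrite !pref_eq; apply: eq_forallb => q'.
  case: (ltnP q' q) => //= hq'.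
  by rewrite !YqE // ?ey (ltn_trans hq' hx).
Qed.

Lemma Yrow_pref j (t : 'I_n) (x y : Om) :
  (Yrow j y t == Yrow j x t) = (pref (Yq j t) Q y == pref (Yq j t) Q x).
Proof.
rewrite pref_eq; apply/eqP/forallP => [E q|E].
  by rewrite ltn_ord /Yq E /= eqxx.
by apply/ffunP => q; have := E q; rewrite ltn_ord /Yq => /eqP.
Qed.

Lemma HZ j m : H mu (Pi j n) (V m) =
  \sum_(t < n) (H mu (st t) (pr2 (Pi j t) (V m)) + \sum_(q < Q) prob j q * AA j m t q).
Proof.
rewrite /Pi (H_pref mu0) //; apply: eq_big => [t|t _]; first by rewrite ltn_ord.
rewrite /et (H_chain mu0); congr (_ + _).
rewrite (@H_ext _ _ mu _ _ _ _ _ _ (pref (Yq j t) Q) (pr2 (st t) (pr2 (pref (et j) t) (V m)))) //; last first.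
  by move=> x y; rewrite Yrow_pref.
rewrite (H_pref mu0) //; apply: eq_big => [q|q _]; first by rewrite ltn_ord.
exact: layer.
Qed.

Lemma st_const j m (t : 'I_n) :
  H mu (st t) (pr2 (Pi j t) (V m)) = \sum_x mu x * ln (P (st t x))^-1.
Proof.
apply: (@H_s_indep _ _ mu mu0 _ _ (st t) (Ut t) P rho_P (stau t)
          (fun a b => can_inj (@stauK t a b)) (@stau_s t) (@stau_U t) (@stau_mu t)).
by move=> x y e; rewrite /pr2 (Pi_U j e) (V_U m e).
Qed.

Lemma AA_mono j j' m m' t q : (j <= j')%N -> (m <= m')%N -> AA j m t q <= AA j' m' t q.
Proof.
move=> hj hm; apply: (H_func mu0) => x y; rewrite /pr2 => -[e1 e2 e3]; congr (_, (_, _)) => //.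
  apply/ffunP => i; rewrite !ffunE; case: ifP => // hi.
  have := congr1 (fun f : {ffun 'I_n -> option ({ffun 'I_Q -> option F} * state K Q)} => f i) e2.
  rewrite !ffunE hi /et /pr2 => -[ey es]; rewrite es; congr (Some (_, _)).
  apply/ffunP => q'; rewrite !ffunE es; case: ifP => // hq'.
  have hq : (q' < Lv j (y.2 i))%N := leq_trans hq' (Lv_mono _ hj).
  have := congr1 (fun f : {ffun 'I_Q -> option F} => f q') ey.
  by rewrite !ffunE es hq => -[->].
apply/ffunP => k; rewrite !ffunE; case: ifP => // hk.
have := congr1 (fun f : {ffun 'I_K -> nat} => f k) e3.
by rewrite !ffunE (leq_trans hm hk).
Qed.

Lemma AA_ge0 j m t q : 0 <= AA j m t q.
Proof. exact: (H_ge0 mu0). Qed.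

Lemma AA_le j m t q : AA j m t q <= ln #|F|%:R.
Proof.
have := @H_range _ _ mu mu0 _ _ (Xq t q) (pr2 (pref (Xq t) q) (pr2 (Pi j t) (V m))) xpredT.
by rewrite mu_sum mul1r; apply.
Qed.

Definition swapn (a b v : nat) := if v == a then b else if v == b then a else v.

Lemma swapn_eq a b v : (swapn a b v == b) = (v == a).
Proof.
rewrite /swapn; case: (eqVneq v a) => [_|va]; first by rewrite eqxx.
case: (eqVneq v b) => [vb|vb] /=; last by rewrite (negbTE vb).
by rewrite -vb eq_sym (negbTE va).
Qed.

Lemma swapnK a b v : swapn a b (swapn a b v) = v.
Proof.
rewrite /swapn; case: (eqVneq v a) => [->|va].
  by case: (eqVneq b a) => [->|ba]; rewrite ?eqxx.
case: (eqVneq v b) => [->|vb]; first by rewrite eqxx.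
by rewrite (negbTE va) (negbTE vb).
Qed.

Lemma swapn_lt a b v m : (a < m)%N -> (b < m)%N -> (v < m)%N -> (swapn a b v < m)%N.
Proof. by move=> ha hb hv; rewrite /swapn; case: ifP => _ //; case: ifP. Qed.

Section Msg.
Variable j : 'I_K.
Let k0 := pi j.
Definition Wj (x : Om) : 'I_(M k0) := x.1 k0.

Definition wswap (a b : 'I_(M k0)) (w : msgs M) : msgs M :=
  finfun (fun k => if k == k0 then insubd (w k) (swapn a b (w k)) else w k).

Lemma wswap_val a b w k : val (wswap a b w k) = if k == k0 then swapn a b (w k) else w k.
Proof.
rewrite /wswap ffunE; case: eqP => [e|] //; rewrite val_insubd.
by subst k; rewrite swapn_lt.
Qed.

Definition wtau (a b : 'I_(M k0)) (x : Om) : Om := (wswap a b x.1, x.2).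

Lemma wtauK a b : cancel (wtau a b) (wtau a b).
Proof.
case=> w s; rewrite /wtau /=; congr pair; apply/ffunP => k; apply: val_inj.
by rewrite !wswap_val; case: eqP => [e|ne] //; rewrite swapnK.
Qed.

Lemma wtau_s a b x : (Wj (wtau a b x) == b) = (Wj x == a).
Proof. by rewrite /Wj /wtau /= -!val_eqE /= wswap_val eqxx swapn_eq. Qed.

Lemma wtau_U a b x : V j.+1 (wtau a b x) = V j.+1 x.
Proof.
rewrite /V /wtau /=; apply/ffunP => k; rewrite !ffunE; case: ifP => // hk.
case: eqP => // /perm_inj e; by move: hk; rewrite e ltnn.
Qed.

Definition rhoM (a : 'I_(M k0)) : R := ((M k0)%:R)^-1.

Lemma rhoM_sum : \sum_a rhoM a = 1.
Proof.
rewrite /rhoM sumr_const card_ord -[_ *+ _]mulr_natl mulfV // pnatr_eq0 -lt0n.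
exact: Mpos.
Qed.

Lemma wtau_mu a b x : Wj x = a -> rhoM a * mu (wtau a b x) = rhoM b * mu x.
Proof. by []. Qed.

Lemma HW_ln : H mu Wj (V j.+1) = ln (M k0)%:R.
Proof.
rewrite (@H_s_indep _ _ mu mu0 _ _ Wj (V j.+1) rhoM rhoM_sum wtau
   (fun a b => can_inj (@wtauK a b)) wtau_s wtau_U wtau_mu) //.
rewrite /rhoM invrK -big_distrl /= mu_sum mul1r //.
Qed.

End Msg.

Lemma Pi_full j' (x y : Om) : Pi j' n x = Pi j' n y ->
  x.2 = y.2 /\ forall t, Yrow j' x t = Yrow j' y t.
Proof.
move=> E.
have h : forall t : 'I_n, Yrow j' x t = Yrow j' y t /\ x.2 t = y.2 t.
  move=> t; have := congr1 (fun f : {ffun 'I_n -> option ({ffun 'I_Q -> option F} * state K Q)} => f t) E.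
  by rewrite !ffunE ltn_ord /et /pr2 => -[-> ->].
by split; [apply/ffunP => t; case: (h t) => _ -> | move=> t; case: (h t)].
Qed.

Section Fano.
Variable j : 'I_K.
Let k0 := pi j.

Definition dj (x : Om) : 'I_(M k0) := dec c k0 (rx c x.1 x.2 k0) x.2.
Definition ej (x : Om) := dj x != Wj j x.
Definition Pe := \sum_x mu x * (ej x)%:R.

Lemma d_Pi x y : Pi j n x = Pi j n y -> dj x = dj y.
Proof.
move=> /Pi_full [es ey]; rewrite /dj; congr (dec c k0 _ _) => //.
apply/ffunP => t; rewrite !ffunE; apply/ffunP => q; rewrite !ffunE -es.
case: ifP => // hq.
have hL : (q < Lv j (x.2 t))%N by apply: leq_trans hq (Lv_ge _ (leqnn j)).
have := congr1 (fun f : {ffun 'I_Q -> option F} => f q) (ey t).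
by rewrite !ffunE /xq -es hL => -[->].
Qed.

Lemma fano : H mu (Wj j) (pr2 (Pi j n) (V j.+1)) <= ln 2 + Pe * ln (M k0)%:R.
Proof.
apply: le_trans (@H_func _ _ mu mu0 _ _ _ (Wj j) (pr2 (Pi j n) (V j.+1)) dj _) _.
  by move=> x y [e1 _]; apply: d_Pi.
have -> : H mu (Wj j) dj = H mu (pr2 (Wj j) ej) dj.
  apply: H_ext => // x y; rewrite /pr2 xpair_eqE.
  case: (eqVneq (Wj j y) (Wj j x)) => [ew|] //=.
  case: (eqVneq (dj y) (dj x)) => [ed|] /=; last by rewrite andbF.
  by rewrite /ej ew ed !eqxx.
rewrite (H_chain mu0); apply: lerD.
  have := @H_range _ _ mu mu0 _ _ ej dj xpredT.
  by rewrite mu_sum mul1r card_bool; apply.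
rewrite /H (bigID ej) /= [X in _ + X]big1 ?addr0; last first.
  move=> x hx; case: (mu_cases mu0 x) => [->|mp]; first by rewrite mul0r.
  rewrite (_ : cm mu (pr2 (Wj j) (pr2 ej dj)) x = cm mu (pr2 ej dj) x).
    by rewrite divff ?ln1 ?mulr0 // gt_eqF // (cm_gt0 mu0 _ mp).
  apply: cm_ext => y; rewrite /pr2 !xpair_eqE.
  case: (eqVneq (ej y) (ej x)) => [ee|]; last by rewrite andbF.
  case: (eqVneq (dj y) (dj x)) => [ed|]; last by rewrite !andbF.
  have hx' : dj x = Wj j x by move: hx; rewrite /ej negbK => /eqP.
  have hy' : dj y = Wj j y by move: hx; rewrite -ee /ej negbK => /eqP.
  by rewrite -hx' -hy' ed eqxx.
have Hr := @H_range _ _ mu mu0 _ _ (Wj j) (pr2 ej dj) ej.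
rewrite card_ord in Hr; apply: le_trans (Hr _) _; first by move=> x y [-> _].
have -> : \sum_(x | ej x) mu x = Pe.
  by rewrite /Pe big_mkcond; apply: eq_bigr => x _; case: (ej x); rewrite ?mulr1 ?mulr0.
by [].
Qed.

End Fano.

Lemma Vsplit (j : 'I_K) (x y : Om) :
  (V j y == V j x) = (Wj j y == Wj j x) && (V j.+1 y == V j.+1 x).
Proof.
apply/eqP/andP => [E|[/eqP E1 /eqP E2]].
  split.
    have := congr1 (fun f : {ffun 'I_K -> nat} => f j) E; rewrite !ffunE leqnn.
    by move/val_inj; rewrite /Wj => ->.
  apply/eqP/ffunP => k; rewrite !ffunE; case: ifP => // hk.
  by have := congr1 (fun f : {ffun 'I_K -> nat} => f k) E; rewrite !ffunE (ltnW hk).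
apply/ffunP => k; rewrite !ffunE; case: ifP => // hk.
rewrite leq_eqVlt in hk; case/orP: hk => [/eqP e|hlt].
  have -> : k = j by apply: val_inj; exact: (esym e).
  by rewrite /Wj in E1; rewrite E1.
by have := congr1 (fun f : {ffun 'I_K -> nat} => f k) E2; rewrite !ffunE hlt.
Qed.

Lemma Ij_ge (j : 'I_K) :
  (1 - Pe j) * ln (M (pi j))%:R - ln 2 <= H mu (Pi j n) (V j.+1) - H mu (Pi j n) (V j).
Proof.
have c1 := H_chain mu0 (Wj j) (Pi j n) (V j.+1).
have c2 := H_chain mu0 (Pi j n) (Wj j) (V j.+1).
have e1 : H mu (pr2 (Wj j) (Pi j n)) (V j.+1) = H mu (pr2 (Pi j n) (Wj j)) (V j.+1).
  by apply: H_ext => // x y; rewrite /pr2 !xpair_eqE (andbC (Wj j y == Wj j x)).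
have e2 : H mu (Pi j n) (pr2 (Wj j) (V j.+1)) = H mu (Pi j n) (V j).
  apply: H_ext => x y; first by rewrite Vsplit /pr2 xpair_eqE.
  by rewrite Vsplit /pr2 xpair_eqE.
have hf := fano j; have hw := HW_ln j.
have E : H mu (Pi j n) (V j.+1) - H mu (Pi j n) (V j)
       = H mu (Wj j) (V j.+1) - H mu (Wj j) (pr2 (Pi j n) (V j.+1)).
  rewrite -e2; apply/eqP; rewrite subr_eq addrAC eq_sym subr_eq addrC -c1 e1 c2 addrC //.
rewrite E hw; move: hf; set h := H mu _ _; set l := ln _; move=> hf.
rewrite mulrBl mul1r; lra.
Qed.

Lemma Pe_le (j : 'I_K) : Pe j <= err_prob P c.
Proof.
rewrite err_eq; apply: ler_sum => x _; apply: ler_wpM2l; first exact: mu0.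
case E: (ej j x) => //; rewrite ler_nat; case: existsP => // -[]; exists (pi j).
by move: E; rewrite /ej /dj /Wj.
Qed.

Lemma Ij_AA (j : nat) : H mu (Pi j n) (V j.+1) - H mu (Pi j n) (V j)
  = \sum_(t < n) \sum_(q < Q) prob j q * (AA j j.+1 t q - AA j j t q).
Proof.
rewrite !HZ -sumrB; apply: eq_bigr => t _; rewrite !st_const opprD addrACA subrr add0r -sumrB.
by apply: eq_bigr => q _; rewrite mulrBr.
Qed.

Lemma comb (K' : nat) (cc : 'I_K' -> R) (a b : nat -> R) (L : R) :
  (forall j, 0 <= cc j) -> 0 <= b 0%N -> (forall j, b j <= b j.+1) -> (forall j, b j <= L) ->
  0 <= L -> 0 <= a 0%N -> (forall j, b j <= a j.+1) ->
  \sum_(j < K') cc j * (b j - a j) <= (\big[Num.max/0]_(j < K') cc j) * L.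
Proof.
move=> hc hb0 hbb hbL hL ha0 hba.
set mx := \big[Num.max/0]_(j < K') cc j.
pose b' (j : nat) := if j is j'.+1 then b j' else 0.
have hb'a : forall j, b' j <= a j by case.
have hb'b : forall j, 0 <= b j - b' j.
  by case=> [|j]; rewrite subr_ge0 //= ?subr0.
apply: le_trans (_ : \sum_(j < K') cc j * (b j - b' j) <= _).
  apply: ler_sum => j _; apply: ler_wpM2l => //; exact: lerB.
apply: le_trans (_ : \sum_(j < K') mx * (b j - b' j) <= _).
  apply: ler_sum => j _; apply: ler_wpM2r => //; exact: le_bigmax.
rewrite -big_distrr /=.
have -> : \sum_(j < K') (b j - b' j) = b' K'.
  rewrite -(big_mkord xpredT (fun j => b' j.+1 - b' j)) telescope_sumr // subr0 //.
apply: ler_wpM2l; first exact: bigmax_ge_id.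
by case: K' {cc mx hc} => [|k] //=.
Qed.

Lemma main_bound (omega : 'I_K -> R) (homega : forall k, 0 <= omega k) :
  \sum_(j < K) omega (pi j) * ((1 - Pe j) * ln (M (pi j))%:R - ln 2)
  <= n%:R * (ln #|F|%:R * \sum_(q < Q) \big[Num.max/0]_(k < K) (omega (pi k) * prob k q)).
Proof.
apply: le_trans (_ : \sum_(j < K) omega (pi j) *
          (H mu (Pi j n) (V j.+1) - H mu (Pi j n) (V j)) <= _).
  by apply: ler_sum => j _; apply: ler_wpM2l => //; exact: Ij_ge.
under eq_bigr do rewrite Ij_AA big_distrr /=.
rewrite exchange_big /=.
set X := ln #|F|%:R * _.
have -> : n%:R * X = \sum_(t < n) X by rewrite sumr_const card_ord mulr_natl.
apply: ler_sum => t _.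
under eq_bigr do rewrite big_distrr /=.
rewrite /X exchange_big /= big_distrr /=; apply: ler_sum => q _.
under eq_bigr do rewrite mulrA.
rewrite mulrC; apply: (@comb K (fun k => omega (pi k) * prob k q) (fun i => AA i i t q) (fun i => AA i i.+1 t q)).
- by move=> k; apply: mulr_ge0 => //; apply: sumr_ge0 => N _.
- exact: AA_ge0.
- by move=> k; apply: AA_mono.
- by move=> k; exact: AA_le.
- by apply: ln_ge0; rewrite ler1n; apply/card_gt0P; exists 0.
- exact: AA_ge0.
- by move=> k; apply: AA_mono.
Qed.
End Chan.

Lemma msize_gt0 (R : realType) (F : finFieldType) n (r : R) : (0 < msize F n r)%N.
Proof. by rewrite /msize leq_max. Qed.

Lemma ln_msize (R : realType) (F : finFieldType) n (r : R) :
  n%:R * r * ln (#|F|%:R : R) - ln 2 <= ln (msize F n r)%:R.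
Proof.
set x : R := (#|F|%:R : R) `^ (n%:R * r).
have Fp : (0 : R) < #|F|%:R by rewrite ltr0n; apply/card_gt0P; exists 0.
have xp : 0 < x by apply: powR_gt0.
have hm : x / 2 < (msize F n r)%:R.
  rewrite /msize -/x; set t := Num.truncn x.
  have h1 : x < t.+1%:R by exact: truncnS_gt.
  have h2 : (t.+1 <= 2 * maxn 1 t)%N.
    case: t {h1} => [|t] //; rewrite (maxn_idPr _) //.
    by rewrite mul2n -addnn -{1}[t.+1]addn0 ltn_add2l.
  rewrite ltr_pdivrMr // (lt_le_trans h1) // -natrM mulnC ler_nat //.
have mp : (0 : R) < (msize F n r)%:R by rewrite ltr0n msize_gt0.
have := hm; rewrite -ltr_ln ?posrE ?divr_gt0 // ln_div ?posrE // /x ln_powR => h.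
exact: ltW.
Qed.

Lemma prob_eq (R : realType) K Q (P : state K Q -> R) (pi : {perm 'I_K}) (k : 'I_K) (q : nat) :
  prob P pi k q = prob_tail_max P pi k q.+1.
Proof. by rewrite /prob /prob_tail_max; apply: eq_bigl => N; rewrite Lv_gt. Qed.

Unset Implicit Arguments.

Theorem theorem1 (R : realType) (F : finFieldType) (K Q : nat)
  (hK : (2 <= K)%N) (hQ : (1 <= Q)%N)
  (P : state K Q -> R)
  (hP0 : forall N, 0 <= P N) (hP1 : \sum_(N : state K Q) P N = 1)
  (rate : 'I_K -> R) (hach : achievable F P rate)
  (omega : 'I_K -> R) (homega : forall k, 0 <= omega k)
  (pi : {perm 'I_K}) :
  \sum_(k < K) omega k * rate k <=
  \sum_(q < Q) \big[Num.max/0]_(k < K)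
      (omega (pi k) * prob_tail_max P pi k q.+1).
Proof.
set B := \sum_(q < Q) _.
have hB0 : 0 <= B by apply: sumr_ge0 => q _; exact: bigmax_ge_id.
have BE : B = \sum_(q < Q) \big[Num.max/0]_(k < K) (omega (pi k) * prob P pi k q).
  by apply: eq_bigr => q _; apply: eq_bigr => k _; rewrite prob_eq.
set S := \sum_(k < K) omega k * rate k.
have SE : S = \sum_(j < K) omega (pi j) * rate (pi j).
  by rewrite /S (reindex_inj (@perm_inj _ pi)).
set W := \sum_(j < K) omega (pi j).
have hW : 0 <= W by apply: sumr_ge0.
set lam : R := ln #|F|%:R.
have hlam : 0 < lam by apply: ln_gt0; rewrite ltr1n; exact: card_finNzRing_gt1.
have l2 : 0 <= ln (2 : R) by apply: ln_ge0; rewrite ler1n.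
have key : forall eps, 0 <= eps -> eps <= 1 -> forall n,
    (exists c : Defs.code F Q n (fun k => msize F n (rate k)), err_prob P c <= eps) ->
    (1 - eps) * S * (n%:R * lam) <= B * (n%:R * lam) + 2 * ln 2 * W.
  move=> eps e0 e1 n [c hc].
  have Mpos : forall k, (0 < msize F n (rate k))%N by move=> k; exact: msize_gt0.
  have mb := main_bound hP0 hP1 pi c Mpos homega; rewrite -BE in mb.
  have low : forall j : 'I_K,
      omega (pi j) * ((1 - eps) * (n%:R * rate (pi j) * lam - ln 2) - ln 2)
      <= omega (pi j) * ((1 - Pe P pi c j) * ln (msize F n (rate (pi j)))%:R - ln 2).
    move=> j; apply: ler_wpM2l => //; rewrite lerD2r.
    have hPe : Pe P pi c j <= eps := le_trans (Pe_le hP0 pi c j) hc.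
    have lnM0 : 0 <= ln ((msize F n (rate (pi j)))%:R : R).
      by apply: ln_ge0; rewrite ler1n msize_gt0.
    apply: le_trans (_ : (1 - eps) * ln (msize F n (rate (pi j)))%:R <= _).
      apply: ler_wpM2l; first by rewrite subr_ge0.
      exact: ln_msize.
    by apply: ler_wpM2r => //; rewrite lerB.
  have := le_trans (ler_sum _ (fun j _ => low j)) mb.
  have -> : \sum_(j < K) omega (pi j) * ((1 - eps) * (n%:R * rate (pi j) * lam - ln 2) - ln 2)
     = (1 - eps) * (n%:R * lam) * \sum_(j < K) omega (pi j) * rate (pi j)
       - ((1 - eps) * ln 2 + ln 2) * W.
    rewrite /W [in RHS]big_distrr /= [in RHS]big_distrr /= -sumrB.
    by apply: eq_bigr => j _; ring.
  rewrite -SE => h.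
  have hw : ((1 - eps) * ln 2 + ln 2) * W <= 2 * ln 2 * W.
    apply: ler_wpM2r => //.
    have t : (1 - eps) * ln (2 : R) <= ln 2 by rewrite ler_piMl // lerBlDr lerDl.
    lra.
  set X := (1 - eps) * S * (n%:R * lam).
  have hX : X = (1 - eps) * (n%:R * lam) * S by rewrite /X; ring.
  have hY : n%:R * (lam * B) = B * (n%:R * lam) by ring.
  rewrite hY -hX in h.
  set Y := B * (n%:R * lam) in h *.
  set Z1 := ((1 - eps) * ln 2 + ln 2) * W in h hw.
  set Z2 := 2 * ln 2 * W in hw *.
  lra.
rewrite -/S; case: (lerP S B) => // hSB; exfalso.
set d := S - B.
have dp : 0 < d by rewrite subr_gt0.
have Sp : 0 < S by apply: le_lt_trans hB0 hSB.
set eps := d / (2 * S).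
have ep : 0 < eps by rewrite divr_gt0 // mulr_gt0.
have e1 : eps <= 1.
  rewrite ler_pdivrMr ?mulr_gt0 // mul1r /d; lra.
have [N0 hN0] := hach eps ep.
set C := 2 * ln 2 * W.
have C0 : 0 <= C by rewrite mulr_ge0 ?mulr_ge0.
set n := maxn N0 (Num.truncn (2 * C / (d * lam))).+1.
have [c hc] := hN0 n (leq_maxl _ _).
have k := key eps (ltW ep) e1 n (ex_intro _ c hc).
have hn : 2 * C / (d * lam) < n%:R.
  by apply: lt_le_trans (truncnS_gt _) _; rewrite ler_nat leq_maxr.
have hn' : 2 * C < n%:R * (d * lam) by rewrite -ltr_pdivrMr ?mulr_gt0.
set u := n%:R * lam in k.
have E1 : (1 - eps) * S * u = B * u + (d * u) / 2.
  by rewrite /eps /d; field; rewrite gt_eqF.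
have E2 : n%:R * (d * lam) = d * u by rewrite /u; ring.
rewrite E1 in k; rewrite E2 in hn'.
set X := B * u in k; set Y := d * u in k hn'.
rewrite -/C in k; lra.
Qed.
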